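(* Let $X$ be a sufficiently large real number, $P=\lfloor 5X\rfloor$, and $f(\alpha)=\sum_{1\le m\le X}e(m^2\alpha)$. For integers $q\ge1$, $a$, $n$ let $S(q,a,n)=\sum_{x=1}^q e\big(\frac{ax^2+nx}{q}\big)$ and $S(q,a)=S(q,a,0)$. Suppose that $(a,q)=1$, $q\le P$ and $|\beta|\le \frac{1}{qP}$. Then there are complex numbers $E(b,q,\beta)$ (for integers $-3q/2<b\le 3q/2$, not depending on $a$) such that $$f\Big(\frac{a}{q}+\beta\Big)=\frac{S(q,a)}{q}\int_0^Xe(x^2\beta)\,dx+\sum_{-3q/2<b\le 3q/2}S(q,a,b)E(b,q,\beta)$$ and $$\sum_{-3q/2<b\le 3q/2}|E(b,q,\beta)|\ll \log (q+2),$$ with an absolute implied constant.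
   Context: $e(z)=e^{2\pi i z}$; $\lfloor x\rfloor$ is the greatest integer not exceeding $x$. *)

(* Defs.v *)
From Stdlib Require Import Reals ZArith.
From Coquelicot Require Import Coquelicot.
Open Scope R_scope.

Definition e (t : R) : C := (cos (2 * PI * t), sin (2 * PI * t)).

(* greatest integer not exceeding x: up x is the unique integer with x < up x <= x + 1 *)
Definition floorR (x : R) : Z := (up x - 1)%Z.

(* zsum lo hi F = sum over integers b with lo < b <= hi of F b *)
Definition zsum {G : AbelianMonoid} (lo hi : Z) (F : Z -> G) : G :=
  sum_n_m (fun k : nat => F (lo + Z.of_nat k)%Z) 1 (Z.to_nat (hi - lo)).

Definition fX (X alpha : R) : C :=
  sum_n_m (fun m : nat => e (INR m ^ 2 * alpha)) 1 (Z.to_nat (floorR X)).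

Definition S3 (q a n : Z) : C :=
  sum_n_m (fun x : nat => e ((IZR a * INR x ^ 2 + IZR n * INR x) / IZR q)) 1 (Z.to_nat q).

Definition S2 (q a : Z) : C := S3 q a 0.

(* range -3q/2 < b <= 3q/2: lower bound floor(-3q/2), upper bound floor(3q/2) *)
Definition blo (q : Z) : Z := Z.div (-3 * q) 2.
Definition bhi (q : Z) : Z := Z.div (3 * q) 2.

(* Main.v *)
Require Import Defs.
From Stdlib Require Import Reals ZArith.
From Coquelicot Require Import Coquelicot.
From Stdlib Require Import Lra Lia Psatz.
Open Scope R_scope.

Lemma Ceq (a b c d : R) : a = c -> b = d -> (a, b) = (c, d).
Proof. intros; subst; reflexivity. Qed.

Lemma e_add s t : e (s + t) = Cmult (e s) (e t).
Proof.
  unfold e, Cmult; simpl.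
  replace (2 * PI * (s + t)) with (2 * PI * s + 2 * PI * t) by ring.
  rewrite cos_plus, sin_plus. apply Ceq; ring.
Qed.

Lemma e_0 : e 0 = RtoC 1.
Proof. unfold e, RtoC. rewrite Rmult_0_r, cos_0, sin_0. reflexivity. Qed.

Lemma e_Z k : e (IZR k) = RtoC 1.
Proof.
  unfold e, RtoC.
  assert (Hs : sin (IZR k * PI) = 0) by (apply sin_eq_0_1; exists k; ring).
  replace (2 * PI * IZR k) with (2 * (IZR k * PI)) by ring.
  rewrite cos_2a_sin, sin_2a, Hs. apply Ceq; ring.
Qed.

Lemma e_one_Z t : e t = RtoC 1 -> exists k, t = IZR k.
Proof.
  unfold e, RtoC. intros H. injection H as Hc Hs.
  replace (2 * PI * t) with (2 * (t * PI)) in Hc by ring.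
  rewrite cos_2a_sin in Hc.
  assert (H0 : sin (t * PI) = 0) by nra.
  destruct (sin_eq_0_0 _ H0) as [k Hk]. exists k.
  apply Rmult_eq_reg_r with PI; [exact Hk | apply PI_neq0].
Qed.

Lemma Cmod_e t : Cmod (e t) = 1.
Proof.
  unfold e, Cmod; simpl.
  pose proof (sin2_cos2 (2 * PI * t)). unfold Rsqr in H.
  replace (cos (2 * PI * t) * (cos (2 * PI * t) * 1) + sin (2 * PI * t) * (sin (2 * PI * t) * 1)) with 1 by lra.
  apply sqrt_1.
Qed.

Lemma e_per t k : e (t + IZR k) = e t.
Proof. rewrite e_add, e_Z. generalize (e t). intros [u v]. unfold Cmult, RtoC; simpl. apply Ceq; ring. Qed.

Lemma PI_RGT_3 : 3 < PI.
Proof. pose proof PI2_3_2. lra. Qed.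

Lemma Rabs_sin_le_pos x : 0 <= x -> Rabs (sin x) <= x.
Proof.
  intros Hx. pose proof (SIN_bound x). pose proof PI_RGT_3.
  destruct (Rle_lt_dec x 1).
  - destruct (Req_dec x 0). { subst. rewrite sin_0, Rabs_R0. lra. }
    assert (0 <= sin x) by (apply sin_ge_0; lra).
    pose proof (sin_lt_x x ltac:(lra)).
    rewrite Rabs_right; lra.
  - apply Rabs_le. lra.
Qed.

Lemma Rabs_sin_le x : Rabs (sin x) <= Rabs x.
Proof.
  destruct (Rle_lt_dec 0 x).
  - rewrite (Rabs_right x) by lra. apply Rabs_sin_le_pos; lra.
  - rewrite (Rabs_left x) by lra. rewrite <- Rabs_Ropp, <- sin_neg.
    apply Rabs_sin_le_pos; lra.
Qed.

Lemma cos_lip x y : Rabs (cos x - cos y) <= Rabs (x - y).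
Proof.
  rewrite form2. rewrite !Rabs_mult.
  pose proof (Rabs_sin_le ((x - y) / 2)). pose proof (SIN_bound ((x + y) / 2)).
  assert (Rabs (sin ((x + y) / 2)) <= 1) by (apply Rabs_le; lra).
  replace (Rabs (-2)) with 2 by (rewrite Rabs_left; lra).
  replace (Rabs ((x - y) / 2)) with (Rabs (x - y) / 2) in H.
  2:{ unfold Rdiv. rewrite Rabs_mult. rewrite (Rabs_right (/2)) by lra. reflexivity. }
  pose proof (Rabs_pos (sin ((x - y) / 2))). pose proof (Rabs_pos (sin ((x + y) / 2))).
  nra.
Qed.

Lemma sin_lip x y : Rabs (sin x - sin y) <= Rabs (x - y).
Proof.
  rewrite form4. rewrite !Rabs_mult.
  pose proof (Rabs_sin_le ((x - y) / 2)). pose proof (COS_bound ((x + y) / 2)).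
  assert (Rabs (cos ((x + y) / 2)) <= 1) by (apply Rabs_le; lra).
  replace (Rabs 2) with 2 by (rewrite Rabs_right; lra).
  replace (Rabs ((x - y) / 2)) with (Rabs (x - y) / 2) in H.
  2:{ unfold Rdiv. rewrite Rabs_mult. rewrite (Rabs_right (/2)) by lra. reflexivity. }
  pose proof (Rabs_pos (sin ((x - y) / 2))). pose proof (Rabs_pos (cos ((x + y) / 2))).
  nra.
Qed.

Lemma Cmod_le_abs (u v : R) : Cmod (u, v) <= Rabs u + Rabs v.
Proof.
  unfold Cmod; simpl.
  rewrite <- (sqrt_Rsqr (Rabs u + Rabs v)) by (pose proof (Rabs_pos u); pose proof (Rabs_pos v); lra).
  apply sqrt_le_1_alt. unfold Rsqr.
  pose proof (Rabs_pos u); pose proof (Rabs_pos v).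
  pose proof (Rsqr_abs u). pose proof (Rsqr_abs v). unfold Rsqr in *. nra.
Qed.

Lemma cs_lt (F : nat -> C) l m : (m < l)%nat -> sum_n_m F l m = RtoC 0.
Proof. intros. rewrite sum_n_m_zero by lia. reflexivity. Qed.

Lemma cs_Sm (F : nat -> C) l m : (l <= S m)%nat -> sum_n_m F l (S m) = Cplus (sum_n_m F l m) (F (S m)).
Proof. intros. rewrite sum_n_Sm by lia. reflexivity. Qed.

Lemma rs_lt (F : nat -> R) l m : (m < l)%nat -> sum_n_m F l m = 0.
Proof. intros. rewrite sum_n_m_zero by lia. reflexivity. Qed.

Lemma rs_Sm (F : nat -> R) l m : (l <= S m)%nat -> sum_n_m F l (S m) = sum_n_m F l m + F (S m).
Proof. intros. rewrite sum_n_Sm by lia. reflexivity. Qed.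



Lemma cs_plus (F G : nat -> C) l m :
  sum_n_m (fun k => Cplus (F k) (G k)) l m = Cplus (sum_n_m F l m) (sum_n_m G l m).
Proof. apply (sum_n_m_plus (G:=C_AbelianMonoid)). Qed.

Lemma cs_mult_l (c : C) (F : nat -> C) l m :
  sum_n_m (fun k => Cmult c (F k)) l m = Cmult c (sum_n_m F l m).
Proof. apply (sum_n_m_mult_l (K:=C_Ring)). Qed.

Lemma cs_mult_r (c : C) (F : nat -> C) l m :
  sum_n_m (fun k => Cmult (F k) c) l m = Cmult (sum_n_m F l m) c.
Proof.
  rewrite Cmult_comm, <- cs_mult_l. apply sum_n_m_ext. intros; apply Cmult_comm.
Qed.

Lemma cs_ext (F G : nat -> C) l m : (forall k, (l <= k <= m)%nat -> F k = G k) ->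
  sum_n_m F l m = sum_n_m G l m.
Proof. apply sum_n_m_ext_loc. Qed.

Lemma rs_ext (F G : nat -> R) l m : (forall k, (l <= k <= m)%nat -> F k = G k) ->
  sum_n_m F l m = sum_n_m G l m.
Proof. apply sum_n_m_ext_loc. Qed.

Lemma rs_le (F G : nat -> R) l m : (forall k, (l <= k <= m)%nat -> F k <= G k) ->
  sum_n_m F l m <= sum_n_m G l m.
Proof.
  intros H. induction m.
  - destruct l. + rewrite !sum_n_n. apply H; lia. + rewrite !rs_lt by lia. lra.
  - destruct (le_lt_dec l (S m)).
    + rewrite !rs_Sm by lia. destruct (le_lt_dec l m).
      * pose proof (IHm ltac:(intros; apply H; lia)). pose proof (H (S m) ltac:(lia)). lra.
      * rewrite !rs_lt by lia. pose proof (H (S m) ltac:(lia)). lra.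
    + rewrite !rs_lt by lia. lra.
Qed.

Lemma rs_plus (F G : nat -> R) l m :
  sum_n_m (fun k => F k + G k) l m = sum_n_m F l m + sum_n_m G l m.
Proof. apply (sum_n_m_plus (G:=R_AbelianMonoid)). Qed.

Lemma rs_mult_l (c : R) (F : nat -> R) l m :
  sum_n_m (fun k => c * F k) l m = c * sum_n_m F l m.
Proof. apply (sum_n_m_mult_l (K:=R_Ring)). Qed.

Lemma rs_const (c : R) l m : (l <= S m)%nat -> sum_n_m (fun _ => c) l m = INR (S m - l) * c.
Proof. intros. apply sum_n_m_const. Qed.

Lemma cs_Cmod (F : nat -> C) l m :
  Cmod (sum_n_m F l m) <= sum_n_m (fun k => Cmod (F k)) l m.
Proof.
  induction m.
  - destruct l. + rewrite !sum_n_n. lra.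
    + rewrite cs_lt, rs_lt by lia. unfold Cmod, RtoC; simpl. replace (0*(0*1)+0*(0*1)) with 0 by ring. rewrite sqrt_0. lra.
  - destruct (le_lt_dec l (S m)).
    + rewrite cs_Sm, rs_Sm by lia. eapply Rle_trans. apply Cmod_triangle. lra.
    + rewrite cs_lt, rs_lt by lia. unfold Cmod, RtoC; simpl. replace (0*(0*1)+0*(0*1)) with 0 by ring. rewrite sqrt_0. lra.
Qed.

Lemma cs_swap (F : nat -> nat -> C) l1 m1 l2 m2 :
  sum_n_m (fun i => sum_n_m (fun j => F i j) l2 m2) l1 m1 =
  sum_n_m (fun j => sum_n_m (fun i => F i j) l1 m1) l2 m2.
Proof.
  induction m1.
  - destruct l1.
    + rewrite sum_n_n. apply cs_ext. intros. rewrite sum_n_n. reflexivity.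
    + rewrite cs_lt by lia. symmetry. rewrite (cs_ext _ (fun _ => RtoC 0)).
      * rewrite (sum_n_m_const_zero (G:=C_AbelianMonoid)). reflexivity.
      * intros. rewrite cs_lt by lia. reflexivity.
  - destruct (le_lt_dec l1 (S m1)).
    + rewrite cs_Sm by lia. rewrite (cs_ext (fun j => sum_n_m (fun i => F i j) l1 (S m1))
         (fun j => Cplus (sum_n_m (fun i => F i j) l1 m1) (F (S m1) j))).
      * rewrite cs_plus. rewrite IHm1. reflexivity.
      * intros. rewrite cs_Sm by lia. reflexivity.
    + rewrite cs_lt by lia. symmetry. rewrite (cs_ext _ (fun _ => RtoC 0)).
      * rewrite (sum_n_m_const_zero (G:=C_AbelianMonoid)). reflexivity.
      * intros. rewrite cs_lt by lia. reflexivity.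
Qed.

Lemma cs_const1 n : sum_n_m (fun _ : nat => RtoC 1) 0 n = RtoC (INR (S n)).
Proof.
  induction n.
  - rewrite sum_n_n. simpl. reflexivity.
  - rewrite cs_Sm by lia. rewrite IHn. rewrite (S_INR (S n)). unfold Cplus, RtoC; simpl. apply Ceq; ring.
Qed.

Lemma cs_shift1 (F : nat -> C) l m : sum_n_m (fun k => F (S k)) l m = sum_n_m F (S l) (S m).
Proof. apply (sum_n_m_S (G:=C_AbelianMonoid)). Qed.

Lemma orth (Q : nat) (j : Z) : (1 <= Q)%nat ->
  sum_n_m (fun b => e (INR b * IZR j / INR Q)) 0 (Q - 1) =
  if Z.eqb (j mod Z.of_nat Q) 0 then RtoC (INR Q) else RtoC 0.
Proof.
  intros HQ.
  assert (HQ0 : INR Q <> 0) by (apply not_0_INR; lia).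
  set (t := IZR j / INR Q).
  set (S := sum_n_m (fun b => e (INR b * IZR j / INR Q)) 0 (Q - 1)).
  destruct (Z.eqb_spec (j mod Z.of_nat Q) 0) as [Hm|Hm].
  - apply Z.mod_divide in Hm; [|lia]. destruct Hm as [k Hk].
    unfold S. rewrite (cs_ext _ (fun _ => RtoC 1)).
    + rewrite cs_const1. f_equal. f_equal. lia.
    + intros b _. rewrite Hk, mult_IZR, <- INR_IZR_INZ.
      replace (INR b * (IZR k * INR Q) / INR Q) with (IZR (Z.of_nat b * k)).
      * apply e_Z.
      * rewrite mult_IZR, <- INR_IZR_INZ. field. auto.
  -
    assert (Hz : Cmult (e t) S = S).
    { unfold S. rewrite <- cs_mult_l.
      rewrite (cs_ext _ (fun b => e (INR (Datatypes.S b) * IZR j / INR Q))).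
      2:{ intros b _. rewrite <- e_add. f_equal. unfold t. rewrite S_INR. field. auto. }
      rewrite (cs_shift1 (fun b => e (INR b * IZR j / INR Q))).
      destruct Q as [|Q']; [lia|]. replace (Datatypes.S Q' - 1)%nat with Q' by lia.
      destruct Q' as [|Q''].
      - rewrite !sum_n_n. simpl INR. replace (1 * IZR j / 1) with (IZR j) by field.
        replace (0 * IZR j / 1) with 0 by field. rewrite e_Z, e_0. reflexivity.
      - rewrite cs_Sm by lia. rewrite (sum_Sn_m _ 0 (Datatypes.S Q'')) by lia.
        change (plus ?a ?b) with (Cplus a b).
        replace (INR (Datatypes.S (Datatypes.S Q'')) * IZR j / INR (Datatypes.S (Datatypes.S Q''))) with (IZR j) by (field; auto).
        replace (INR 0 * IZR j / INR (Datatypes.S (Datatypes.S Q''))) with 0 by (simpl; field; auto).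
        rewrite e_Z, e_0. apply Cplus_comm. }
    assert (Hne : Cminus (e t) (RtoC 1) <> RtoC 0).
    { intros H. assert (e t = RtoC 1).
      { transitivity (Cplus (Cminus (e t) (RtoC 1)) (RtoC 1)); [ring|]. rewrite H. ring. }
      destruct (e_one_Z _ H0) as [k Hk]. apply Hm. apply Z.mod_divide; [lia|]. exists k.
      apply eq_IZR. rewrite mult_IZR, <- INR_IZR_INZ. unfold t in Hk.
      apply (Rmult_eq_compat_r (INR Q)) in Hk. unfold Rdiv in Hk. rewrite Rmult_assoc, Rinv_l in Hk by auto. lra. }
    assert (H2 : Cmult (Cminus (e t) (RtoC 1)) S = RtoC 0).
    { transitivity (Cminus (Cmult (e t) S) S); [ring|]. rewrite Hz. ring. }
    replace S with (Cmult (Cinv (Cminus (e t) (RtoC 1))) (Cmult (Cminus (e t) (RtoC 1)) S)).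
    + rewrite H2. apply Cmult_0_r.
    + field. exact Hne.
Qed.

Definition ind (Q : nat) (j : Z) : C := if Z.eqb (j mod Z.of_nat Q) 0 then RtoC 1 else RtoC 0.

Lemma cs_period (H : nat -> C) (Q : nat) : (1 <= Q)%nat -> (forall x, H (x + Q)%nat = H x) ->
  forall k, sum_n_m H 1 Q = sum_n_m (fun x => H (x + k)%nat) 1 Q.
Proof.
  intros HQ Hp k. induction k.
  - apply cs_ext. intros. f_equal. lia.
  - rewrite IHk.
    rewrite (cs_ext (fun x => H (x + Datatypes.S k)%nat) (fun x => (fun y => H (y + k)%nat) (Datatypes.S x))).
    2:{ intros. simpl. f_equal. lia. }
    rewrite (cs_shift1 (fun y => H (y + k)%nat)). destruct Q as [|Q']; [lia|].
    rewrite (cs_Sm _ 2 (Datatypes.S Q')) by lia. rewrite (sum_Sn_m _ 1 (Datatypes.S Q')) by lia.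
    change (plus ?a ?b) with (Cplus a b).
    replace (Datatypes.S (Datatypes.S Q') + k)%nat with ((1 + k) + Datatypes.S Q')%nat by lia.
    rewrite Hp. apply Cplus_comm.
Qed.

Lemma collapse (G : nat -> C) (Q m : nat) : (1 <= Q)%nat -> (forall x, G (x + Q)%nat = G x) ->
  sum_n_m (fun x => Cmult (G x) (ind Q (Z.of_nat x - Z.of_nat m))) 1 Q = G m.
Proof.
  intros HQ Hp.
  rewrite (cs_period (fun x => Cmult (G x) (ind Q (Z.of_nat x - Z.of_nat m))) Q HQ) with (k := m).
  2:{ intros x. rewrite Hp. f_equal. unfold ind.
      replace (Z.of_nat (x + Q) - Z.of_nat m)%Z with ((Z.of_nat x - Z.of_nat m) + 1 * Z.of_nat Q)%Z by lia.
      rewrite Z.mod_add by lia. reflexivity. }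
  destruct Q as [|Q']; [lia|]. rewrite cs_Sm by lia.
  rewrite (cs_ext _ (fun _ => RtoC 0)).
  2:{ intros x Hx. unfold ind. replace (Z.of_nat (x + m) - Z.of_nat m)%Z with (Z.of_nat x) by lia.
      rewrite Z.mod_small by lia. destruct (Z.eqb_spec (Z.of_nat x) 0); [lia|]. apply Cmult_0_r. }
  rewrite (sum_n_m_const_zero (G:=C_AbelianMonoid)).
  unfold ind. replace (Z.of_nat (Datatypes.S Q' + m) - Z.of_nat m)%Z with (1 * Z.of_nat (Datatypes.S Q'))%Z by lia.
  rewrite Z.mod_mul by lia. simpl Z.eqb.
  replace (Datatypes.S Q' + m)%nat with (m + Datatypes.S Q')%nat by lia. rewrite Hp.
  change (@zero C_AbelianMonoid) with (RtoC 0). rewrite Cmult_1_r. apply Cplus_0_l.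
Qed.

Definition S3' (Q : nat) (a b : Z) : C :=
  sum_n_m (fun x : nat => e ((IZR a * INR x ^ 2 + IZR b * INR x) / INR Q)) 1 Q.

Definition Tb (Q N : nat) (beta : R) (b : Z) : C :=
  sum_n_m (fun m : nat => e (beta * INR m ^ 2 - IZR b * INR m / INR Q)) 1 N.

Lemma ident (Q N : nat) (a : Z) (beta : R) : (1 <= Q)%nat ->
  sum_n_m (fun b => Cmult (S3' Q a (Z.of_nat b)) (Cmult (RtoC (/ INR Q)) (Tb Q N beta (Z.of_nat b)))) 0 (Q - 1)
  = sum_n_m (fun m => e (INR m ^ 2 * (IZR a / INR Q + beta))) 1 N.
Proof.
  intros HQ. assert (HQ0 : INR Q <> 0) by (apply not_0_INR; lia).
  set (A := fun x m : nat => IZR a * INR x ^ 2 / INR Q + beta * INR m ^ 2).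
  rewrite (cs_ext _ (fun b => Cmult (RtoC (/ INR Q)) (sum_n_m (fun x => sum_n_m (fun m =>
     Cmult (e (A x m)) (e (INR b * IZR (Z.of_nat x - Z.of_nat m) / INR Q))) 1 N) 1 Q))).
  2:{ intros b _. rewrite Cmult_assoc, (Cmult_comm (S3' _ _ _)), <- Cmult_assoc. f_equal.
      unfold S3', Tb. rewrite <- cs_mult_r. apply cs_ext. intros x _.
      rewrite <- cs_mult_l. apply cs_ext. intros m _. rewrite <- !e_add. f_equal.
      unfold A. rewrite minus_IZR, <- !INR_IZR_INZ. field. auto. }
  rewrite cs_mult_l. rewrite cs_swap.
  rewrite (cs_ext _ (fun x => sum_n_m (fun m => Cmult (e (A x m)) (sum_n_m (fun b => e (INR b * IZR (Z.of_nat x - Z.of_nat m) / INR Q)) 0 (Q-1))) 1 N)).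
  2:{ intros x _. rewrite cs_swap. apply cs_ext. intros m _. apply cs_mult_l. }
  rewrite cs_swap. rewrite <- cs_mult_l. apply cs_ext. intros m Hm.
  rewrite <- cs_mult_l.
  rewrite (cs_ext _ (fun x => Cmult (e (A x m)) (ind Q (Z.of_nat x - Z.of_nat m)))).
  2:{ intros x _. rewrite orth by auto. unfold ind. destruct (_ =? 0)%Z.
      - rewrite Cmult_assoc, (Cmult_comm (RtoC _)), <- Cmult_assoc. f_equal.
        unfold Cmult, RtoC; simpl. apply Ceq; field; auto.
      - ring. }
  rewrite (collapse (fun x => e (A x m)) Q m HQ).
  - unfold A. f_equal. field. auto.
  - intros x. unfold A. rewrite plus_INR.
    replace (IZR a * (INR x + INR Q) ^ 2 / INR Q + beta * INR m ^ 2) with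
      ((IZR a * INR x ^ 2 / INR Q + beta * INR m ^ 2) + IZR (a * (2 * Z.of_nat x + Z.of_nat Q))).
    + apply e_per.
    + rewrite mult_IZR, plus_IZR, mult_IZR, <- !INR_IZR_INZ. field. auto.
Qed.

Ltac Rring := match goal with |- ?a = ?b => change (@eq R a b) end; ring.
Ltac Cring := match goal with |- ?a = ?b => change (@eq C a b) end; ring.

Lemma abel_id (z c : nat -> C) (N : nat) : (1 <= N)%nat ->
  sum_n_m (fun m => Cmult (c m) (Cminus (z (S m)) (z m))) 1 N =
  Cminus (Cminus (Cmult (c N) (z (S N))) (Cmult (c 1%nat) (z 1%nat)))
         (sum_n_m (fun m => Cmult (z m) (Cminus (c m) (c (m - 1)%nat))) 2 N).
Proof.
  intros HN. induction N; [lia|].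
  destruct N.
  - rewrite sum_n_n. rewrite cs_lt by lia. Cring.
  - rewrite cs_Sm by lia. rewrite IHN by lia. rewrite (cs_Sm _ 2 (S N)) by lia.
    replace (S (S N) - 1)%nat with (S N) by lia. Cring.
Qed.

Lemma Cmod_0_v (v : R) : Cmod (0, v) = Rabs v.
Proof. unfold Cmod; simpl. rewrite <- sqrt_Rsqr_abs. f_equal. unfold Rsqr. ring. Qed.

Lemma Cmod_ge0 z : 0 <= Cmod z.
Proof. unfold Cmod. apply sqrt_pos. Qed.

Lemma tele_up (s : nat -> R) (N : nat) : (1 <= N)%nat ->
  (forall m, (1 <= m)%nat -> (m < N)%nat -> s m <= s (S m)) ->
  sum_n_m (fun m => Rabs (s m - s (m - 1)%nat)) 2 N = s N - s 1%nat.
Proof.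
  intros HN Hs. induction N; [lia|]. destruct N.
  - rewrite rs_lt by lia. Rring.
  - rewrite rs_Sm by lia. rewrite IHN by (try lia; intros; apply Hs; lia).
    replace (S (S N) - 1)%nat with (S N) by lia.
    rewrite Rabs_right. Rring. pose proof (Hs (S N) ltac:(lia) ltac:(lia)). lra.
Qed.

Lemma tele_bound (s : nat -> R) (N : nat) (B : R) : (1 <= N)%nat ->
  ((forall m, (1 <= m)%nat -> (m < N)%nat -> s m <= s (S m)) \/
   (forall m, (1 <= m)%nat -> (m < N)%nat -> s (S m) <= s m)) ->
  (forall m, (1 <= m <= N)%nat -> Rabs (s m) <= B) ->
  sum_n_m (fun m => Rabs (s m - s (m - 1)%nat)) 2 N <= 2 * B.
Proof.
  intros HN [Hs|Hs] HB.
  - rewrite tele_up by auto. pose proof (HB N ltac:(lia)). pose proof (HB 1%nat ltac:(lia)).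
    apply Rabs_le_between in H. apply Rabs_le_between in H0. lra.
  - rewrite (rs_ext _ (fun m => Rabs ((fun k => - s k) m - (fun k => - s k) (m - 1)%nat))).
    + rewrite tele_up by (auto; intros; pose proof (Hs m H H0); lra).
      pose proof (HB N ltac:(lia)). pose proof (HB 1%nat ltac:(lia)).
      apply Rabs_le_between in H. apply Rabs_le_between in H0. lra.
    + intros. rewrite <- Rabs_Ropp. f_equal. ring.
Qed.

Lemma abel_bound (z c : nat -> C) (s : nat -> R) (alpha A B : R) (N : nat) : (1 <= N)%nat ->
  (forall m, (1 <= m <= S N)%nat -> Cmod (z m) <= 1) ->
  (forall m, (1 <= m <= N)%nat -> c m = (alpha, s m)) ->
  ((forall m, (1 <= m)%nat -> (m < N)%nat -> s m <= s (S m)) \/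
   (forall m, (1 <= m)%nat -> (m < N)%nat -> s (S m) <= s m)) ->
  Rabs alpha <= A ->
  (forall m, (1 <= m <= N)%nat -> Rabs (s m) <= B) ->
  Cmod (sum_n_m (fun m => Cmult (c m) (Cminus (z (S m)) (z m))) 1 N) <= 2 * A + 4 * B.
Proof.
  intros HN Hz Hc Hmono HA HB.
  rewrite abel_id by auto.
  assert (Hcb : forall m, (1 <= m <= N)%nat -> Cmod (c m) <= A + B).
  { intros. rewrite Hc by auto. eapply Rle_trans. apply Cmod_le_abs. pose proof (HB m H). lra. }
  assert (Hsum : Cmod (sum_n_m (fun m => Cmult (z m) (Cminus (c m) (c (m - 1)%nat))) 2 N) <= 2 * B).
  { eapply Rle_trans. apply cs_Cmod. eapply Rle_trans. 2:{ apply (tele_bound s N B); auto. }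
    apply rs_le. intros m Hm. rewrite Cmod_mult. rewrite Hc by lia. rewrite (Hc (m-1)%nat) by lia.
    unfold Cminus, Cplus, Copp; simpl. replace (alpha + - alpha) with 0 by ring.
    rewrite Cmod_0_v. pose proof (Hz m ltac:(lia)). pose proof (Rabs_pos (s m + - s (m-1)%nat)).
    pose proof (Cmod_ge0 (z m)). unfold Rminus. nra. }
  unfold Cminus. eapply Rle_trans. apply Cmod_triangle. rewrite Cmod_opp.
  eapply Rle_trans. apply Rplus_le_compat_r. apply Cmod_triangle. rewrite Cmod_opp.
  rewrite !Cmod_mult.
  pose proof (Hcb N ltac:(lia)). pose proof (Hcb 1%nat ltac:(lia)).
  pose proof (Hz (S N) ltac:(lia)). pose proof (Hz 1%nat ltac:(lia)).
  pose proof (Cmod_ge0 (c N)). pose proof (Cmod_ge0 (c 1%nat)).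
  pose proof (Cmod_ge0 (z (S N))). pose proof (Cmod_ge0 (z 1%nat)).
  unfold Cminus in Hsum. nra.
Qed.

Definition cot (u : R) := cos u / sin u.

Lemma coeff_id (D : R) : sin (PI * D) <> 0 ->
  Cmult (- / 2, - (cot (PI * D)) / 2) (Cminus (e D) (RtoC 1)) = RtoC 1.
Proof.
  intros Hs. unfold e, cot, Cminus, Cmult, Cplus, Copp, RtoC; simpl.
  replace (2 * PI * D) with (2 * (PI * D)) by ring.
  rewrite cos_2a_sin, sin_2a. pose proof (sin2_cos2 (PI * D)). unfold Rsqr in H.
  apply Ceq; field_simplify; auto; nra.
Qed.

Lemma kl_step (phi D : R) : sin (PI * D) <> 0 ->
  e phi = Cmult (- / 2, - (cot (PI * D)) / 2) (Cminus (e (phi + D)) (e phi)).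
Proof.
  intros Hs. rewrite e_add.
  transitivity (Cmult (e phi) (Cmult (- / 2, - (cot (PI * D)) / 2) (Cminus (e D) (RtoC 1)))).
  - rewrite coeff_id by auto. rewrite Cmult_1_r. reflexivity.
  - match goal with |- ?a = ?b => change (@eq C a b) end. ring.
Qed.

Lemma sin_poly_lb u : 0 <= u -> u <= PI -> u - u ^ 3 / 6 <= sin u.
Proof.
  intros H0 H1. destruct (sin_bound u 0 H0 H1) as [Hsb _].
  unfold sin_approx in Hsb. simpl in Hsb. unfold sum_f_R0, sin_term in Hsb. simpl in Hsb.
  lra.
Qed.

Lemma cos_poly u : - PI / 2 <= u -> u <= PI / 2 -> 1 - u ^ 2 / 2 <= cos u <= 1 - u ^ 2 / 2 + u ^ 4 / 24.
Proof.
  intros H0 H1. destruct (cos_bound u 0 H0 H1) as [Hc1 Hc2].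
  unfold cos_approx in Hc1, Hc2. simpl in Hc1, Hc2. unfold sum_f_R0, cos_term in Hc1, Hc2. simpl in Hc1, Hc2.
  split; lra.
Qed.

Lemma sin_lb3 u : 0 <= u -> u <= 2 -> u / 3 <= sin u.
Proof.
  intros H0 H2. pose proof PI_RGT_3.
  pose proof (sin_poly_lb u H0 ltac:(lra)).
  assert (u^3 <= 4 * u) by nra. nra.
Qed.

Lemma sin_lb_delta u d : 0 < d <= /2 -> PI * d <= u -> u <= PI * (1 - d) -> d <= sin u.
Proof.
  intros Hd H1 H2. pose proof PI_RGT_3. pose proof PI_4.
  destruct (Rle_lt_dec u (PI/2)).
  - pose proof (sin_lb3 u ltac:(nra) ltac:(lra)). nra.
  - rewrite <- sin_PI_x. pose proof (sin_lb3 (PI - u) ltac:(nra) ltac:(lra)). nra.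
Qed.

Lemma cot_bound u d : 0 < d <= /2 -> PI * d <= u -> u <= PI * (1 - d) -> Rabs (cot u) <= / d.
Proof.
  intros Hd H1 H2. pose proof (sin_lb_delta u d Hd H1 H2).
  unfold cot, Rdiv. rewrite Rabs_mult, Rabs_inv, (Rabs_right (sin u)) by lra.
  pose proof (COS_bound u). assert (Rabs (cos u) <= 1) by (apply Rabs_le; lra).
  apply Rle_trans with (1 * / sin u).
  - apply Rmult_le_compat_r; [|lra]. left; apply Rinv_0_lt_compat; lra.
  - rewrite Rmult_1_l. apply Rinv_le_contravar; lra.
Qed.

Lemma cot_decr u v : 0 < u -> u <= v -> v < PI -> cot v <= cot u.
Proof.
  intros Hu Huv Hv. unfold cot.
  assert (0 < sin u) by (apply sin_gt_0; lra). assert (0 < sin v) by (apply sin_gt_0; lra).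
  assert (0 <= sin (v - u)) by (apply sin_ge_0; lra).
  rewrite sin_minus in H1.
  apply Rmult_le_reg_r with (sin u * sin v). nra.
  unfold Rdiv. replace (cos v * / sin v * (sin u * sin v)) with (cos v * sin u) by (field; lra). replace (cos u * / sin u * (sin u * sin v)) with (cos u * sin v) by (field; lra). lra.
Qed.

Definition gfun (u : R) := cot u - / u.

Lemma gfun_bound u : 0 < u -> u <= PI / 2 -> Rabs (gfun u) <= 1.
Proof.
  intros H0 H1. pose proof PI_RGT_3. pose proof PI_4.
  assert (0 < sin u) by (apply sin_gt_0; lra).
  pose proof (sin_lt_x u H0).
  pose proof (sin_poly_lb u ltac:(lra) ltac:(lra)) as Hs.
  destruct (cos_poly u ltac:(lra) ltac:(lra)) as [Hc1 Hc2].
  assert (0 <= cos u) by (apply cos_ge_0; lra).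
  unfold gfun, cot. apply Rabs_le. split.
  -
    assert (cos u / sin u >= cos u / u).
    { unfold Rdiv. apply Rle_ge. apply Rmult_le_compat_l; auto. apply Rinv_le_contravar; lra. }
    assert (cos u / u - / u >= - 1).
    { unfold Rdiv. apply Rle_ge. apply Rmult_le_reg_r with u; auto.
      replace ((cos u * / u - / u) * u) with (cos u - 1) by (field; lra). nra. }
    lra.
  -
    assert (u * cos u <= sin u) by nra.
    assert (cos u / sin u <= / u).
    { apply Rmult_le_reg_r with (u * sin u). nra. unfold Rdiv. replace (cos u * / sin u * (u * sin u)) with (u * cos u) by (field; lra). replace (/ u * (u * sin u)) with (sin u) by (field; lra). lra. }
    lra.
Qed.

Lemma gfun_decr u v : 0 < u -> u <= v -> v < PI -> gfun v <= gfun u.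
Proof.
  intros Hu Huv Hv. destruct (Req_dec u v); [subst; lra|].
  assert (- gfun u < - gfun v).
  { apply (incr_function (fun x => - gfun x) 0 PI (fun x => / (sin x)^2 - / x^2)).
    - intros x Hx1 Hx2. simpl in Hx1, Hx2. unfold gfun, cot.
      assert (0 < sin x) by (apply sin_gt_0; lra).
      auto_derive.
      + split; [lra|]. split; [lra|]. auto.
      + assert (Hc : cos x ^ 2 = 1 - sin x ^ 2) by (pose proof (sin2_cos2 x); unfold Rsqr in *; nra). transitivity (1 + cos x ^ 2 / sin x ^ 2 - / x ^ 2); [field; lra|]. rewrite Hc. field. lra.
    - intros x Hx1 Hx2. simpl in Hx1, Hx2.
      assert (0 < sin x) by (apply sin_gt_0; lra).
      pose proof (sin_lt_x x Hx1).
      assert (sin x ^2 < x^2) by nra.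
      apply Rlt_gt. apply Rlt_Rminus. apply Rinv_lt_contravar; [apply Rmult_lt_0_compat; apply pow_lt; lra | auto].
    - simpl; lra.
    - lra.
    - simpl; lra. }
  lra.
Qed.

Lemma gfun_odd u : gfun (- u) = - gfun u.
Proof. unfold gfun, cot. rewrite sin_neg, cos_neg. unfold Rdiv. rewrite !Rinv_opp. ring. Qed.

Lemma cot_odd u : cot (- u) = - cot u.
Proof. unfold cot. rewrite sin_neg, cos_neg. unfold Rdiv. rewrite Rinv_opp. ring. Qed.

Ltac Rfield := match goal with |- ?a = ?b => change (@eq R a b) end; field.

Definition cf (beta x : R) := cos (2 * PI * (x ^ 2 * beta)).
Definition sf (beta x : R) := sin (2 * PI * (x ^ 2 * beta)).

Lemma cf_cont beta x : continuous (cf beta) x.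
Proof. apply (@ex_derive_continuous R_AbsRing R_NormedModule). unfold cf. auto_derive. auto. Qed.
Lemma sf_cont beta x : continuous (sf beta) x.
Proof. apply (@ex_derive_continuous R_AbsRing R_NormedModule). unfold sf. auto_derive. auto. Qed.

Lemma cf_ex beta a b : ex_RInt (cf beta) a b.
Proof. apply (@ex_RInt_continuous R_CompleteNormedModule). intros; apply cf_cont. Qed.
Lemma sf_ex beta a b : ex_RInt (sf beta) a b.
Proof. apply (@ex_RInt_continuous R_CompleteNormedModule). intros; apply sf_cont. Qed.

Lemma RInt_C beta a b :
  RInt (V := C_R_CompleteNormedModule) (fun x => e (x ^ 2 * beta)) a b = (RInt (cf beta) a b, RInt (sf beta) a b).
Proof.
  apply is_RInt_unique.
  apply (is_RInt_fct_extend_pair (U:=R_NormedModule) (V:=R_NormedModule) (fun x => e (x ^ 2 * beta))).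
  - apply (RInt_correct (cf beta)). apply cf_ex.
  - apply (RInt_correct (sf beta)). apply sf_ex.
Qed.

Lemma sum_RInt (f : R -> R) (Hf : forall a b, ex_RInt f a b) N :
  sum_n_m (fun m => (RInt f (INR m) (INR m + 1) : R)) 1 N = RInt f 1 (INR N + 1).
Proof.
  induction N.
  - rewrite rs_lt by lia. simpl. rewrite Rplus_0_l. rewrite RInt_point. reflexivity.
  - rewrite rs_Sm by lia. rewrite IHN. rewrite S_INR.
    rewrite <- (RInt_Chasles f 1 (INR N + 1) (INR N + 1 + 1)) by auto. reflexivity.
Qed.

Lemma lin_cos_int a c D : D <> 0 ->
  RInt (fun x => cos (2 * PI * (c + D * (x - a)))) a (a + 1) = (sin (2 * PI * (c + D)) - sin (2 * PI * c)) / (2 * PI * D).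
Proof.
  intros HD. pose proof PI_RGT_3.
  assert (Hi := @is_RInt_derive R_CompleteNormedModule (fun x => sin (2 * PI * (c + D * (x - a))) / (2 * PI * D)) (fun x => cos (2 * PI * (c + D * (x - a)))) a (a + 1)).
    rewrite (is_RInt_unique _ _ _ _ (Hi ltac:(intros x _; auto_derive; [auto | unfold Rminus; Rfield; split; lra]) ltac:(intros x _; apply (@ex_derive_continuous R_AbsRing R_NormedModule); auto_derive; auto))).
  simpl. unfold minus, plus, opp; simpl. replace (a + 1 - a) with 1 by ring. replace (a - a) with 0 by ring.
    replace (D * 1) with D by ring. replace (D * 0) with 0 by ring. rewrite Rplus_0_r. field. split; lra.
Qed.

Lemma lin_sin_int a c D : D <> 0 ->
  RInt (fun x => sin (2 * PI * (c + D * (x - a)))) a (a + 1) = (cos (2 * PI * c) - cos (2 * PI * (c + D))) / (2 * PI * D).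
Proof.
  intros HD. pose proof PI_RGT_3.
  assert (Hi := @is_RInt_derive R_CompleteNormedModule (fun x => - cos (2 * PI * (c + D * (x - a))) / (2 * PI * D)) (fun x => sin (2 * PI * (c + D * (x - a)))) a (a + 1)).
    rewrite (is_RInt_unique _ _ _ _ (Hi ltac:(intros x _; auto_derive; [auto | unfold Rminus; Rfield; split; lra]) ltac:(intros x _; apply (@ex_derive_continuous R_AbsRing R_NormedModule); auto_derive; auto))).
  simpl. unfold minus, plus, opp; simpl. replace (a + 1 - a) with 1 by ring. replace (a - a) with 0 by ring.
    replace (D * 1) with D by ring. replace (D * 0) with 0 by ring. rewrite Rplus_0_r. field. split; lra.
Qed.

Lemma quad_bound a beta x : a <= x <= a + 1 ->
  Rabs (2 * PI * (x ^ 2 * beta) - 2 * PI * (a ^ 2 * beta + (2 * a + 1) * beta * (x - a))) <= 2 * PI * Rabs beta.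
Proof.
  intros Hx. pose proof PI_RGT_3.
  replace (2 * PI * (x ^ 2 * beta) - 2 * PI * (a ^ 2 * beta + (2 * a + 1) * beta * (x - a)))
    with ((2 * PI * beta) * ((x - a) * (x - a - 1))) by ring.
  rewrite (Rabs_mult (2 * PI * beta)). rewrite (Rabs_mult (2 * PI) beta), (Rabs_right (2 * PI)) by lra.
  assert (Rabs ((x - a) * (x - a - 1)) <= 1).
  { apply Rabs_le. split; nra. }
  pose proof (Rabs_pos beta). rewrite <- (Rmult_1_r (2 * PI * Rabs beta)) at 2. apply Rmult_le_compat_l; [nra|auto].
Qed.

Lemma piece_cos a beta : 0 <= a -> beta <> 0 ->
  Rabs (RInt (cf beta) a (a + 1) - (sin (2 * PI * ((a + 1) ^ 2 * beta)) - sin (2 * PI * (a ^ 2 * beta))) / (2 * PI * ((2 * a + 1) * beta)))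
  <= 2 * PI * Rabs beta.
Proof.
  intros Ha Hb. assert (HD : (2 * a + 1) * beta <> 0) by (apply Rmult_integral_contrapositive; split; lra).
  replace ((a + 1) ^ 2 * beta) with (a ^ 2 * beta + (2 * a + 1) * beta) by ring.
  rewrite <- (lin_cos_int a (a ^ 2 * beta) ((2 * a + 1) * beta)) by auto.
  assert (Hex : ex_RInt (fun x => cos (2 * PI * (a ^ 2 * beta + (2 * a + 1) * beta * (x - a)))) a (a + 1)).
  { apply (@ex_RInt_continuous R_CompleteNormedModule). intros. apply (@ex_derive_continuous R_AbsRing R_NormedModule). auto_derive. auto. }
  change (RInt (cf beta) a (a + 1) - RInt (fun x => cos (2 * PI * (a ^ 2 * beta + (2 * a + 1) * beta * (x - a)))) a (a + 1))
    with (minus (RInt (cf beta) a (a + 1)) (RInt (fun x => cos (2 * PI * (a ^ 2 * beta + (2 * a + 1) * beta * (x - a)))) a (a + 1))).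
  rewrite <- RInt_minus by (auto; apply cf_ex).
  replace (2 * PI * Rabs beta) with ((a + 1 - a) * (2 * PI * Rabs beta)) by ring.
  apply abs_RInt_le_const; [lra| |].
  - apply ex_RInt_minus; [apply cf_ex | auto].
  - intros t Ht. unfold minus, plus, opp; simpl. unfold cf.
    eapply Rle_trans. apply cos_lip. apply quad_bound. lra.
Qed.

Lemma piece_sin a beta : 0 <= a -> beta <> 0 ->
  Rabs (RInt (sf beta) a (a + 1) - (cos (2 * PI * (a ^ 2 * beta)) - cos (2 * PI * ((a + 1) ^ 2 * beta))) / (2 * PI * ((2 * a + 1) * beta)))
  <= 2 * PI * Rabs beta.
Proof.
  intros Ha Hb. assert (HD : (2 * a + 1) * beta <> 0) by (apply Rmult_integral_contrapositive; split; lra).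
  replace ((a + 1) ^ 2 * beta) with (a ^ 2 * beta + (2 * a + 1) * beta) by ring.
  rewrite <- (lin_sin_int a (a ^ 2 * beta) ((2 * a + 1) * beta)) by auto.
  assert (Hex : ex_RInt (fun x => sin (2 * PI * (a ^ 2 * beta + (2 * a + 1) * beta * (x - a)))) a (a + 1)).
  { apply (@ex_RInt_continuous R_CompleteNormedModule). intros. apply (@ex_derive_continuous R_AbsRing R_NormedModule). auto_derive. auto. }
  change (RInt (sf beta) a (a + 1) - RInt (fun x => sin (2 * PI * (a ^ 2 * beta + (2 * a + 1) * beta * (x - a)))) a (a + 1))
    with (minus (RInt (sf beta) a (a + 1)) (RInt (fun x => sin (2 * PI * (a ^ 2 * beta + (2 * a + 1) * beta * (x - a)))) a (a + 1))).
  rewrite <- RInt_minus by (auto; apply sf_ex).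
  replace (2 * PI * Rabs beta) with ((a + 1 - a) * (2 * PI * Rabs beta)) by ring.
  apply abs_RInt_le_const; [lra| |].
  - apply ex_RInt_minus; [apply sf_ex | auto].
  - intros t Ht. unfold minus, plus, opp; simpl. unfold sf.
    eapply Rle_trans. apply sin_lip. apply quad_bound. lra.
Qed.

Lemma RInt_bound1 (f : R -> R) a b : a <= b -> ex_RInt f a b -> (forall x, Rabs (f x) <= 1) ->
  Rabs (RInt f a b) <= b - a.
Proof.
  intros Hab Hex Hf. replace (b - a) with ((b - a) * 1) by ring.
  apply abs_RInt_le_const; auto.
Qed.

Lemma cf_le1 beta x : Rabs (cf beta x) <= 1.
Proof. unfold cf. pose proof (COS_bound (2 * PI * (x ^ 2 * beta))). apply Rabs_le; lra. Qed.
Lemma sf_le1 beta x : Rabs (sf beta x) <= 1.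
Proof. unfold sf. pose proof (SIN_bound (2 * PI * (x ^ 2 * beta))). apply Rabs_le; lra. Qed.

Lemma KL_b (Q N b : nat) (beta : R) :
  (1 <= N)%nat -> (1 <= b)%nat -> (b < Q)%nat ->
  (2 * INR N + 1) * Rabs beta <= / (2 * INR Q) ->
  Cmod (Tb Q N beta (Z.of_nat b)) <= 1 + 4 * INR Q * (/ INR b + / INR (Q - b)).
Proof.
  intros HN Hb HbQ Hbeta.
  set (r := (Q - b)%nat).
  assert (Hr : (1 <= r)%nat) by (unfold r; lia).
  assert (HQr : INR Q = INR b + INR r) by (unfold r; rewrite <- plus_INR; f_equal; lia).
  assert (Hb1 : 1 <= INR b) by (apply (le_INR 1); lia).
  assert (Hr1 : 1 <= INR r) by (apply (le_INR 1); lia).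
  assert (HQ1 : 2 <= INR Q) by lra.
  pose proof PI_RGT_3.
  set (phi := fun m : nat => beta * INR m ^ 2 + INR r * INR m / INR Q).
  set (Dm := fun m : nat => beta * (2 * INR m + 1) + INR r / INR Q).
  set (d := INR b * INR r / (2 * INR Q ^ 2)).
  assert (Hd : 0 < d <= / 2).
  { unfold d. split.
    - apply Rdiv_lt_0_compat; nra.
    - apply Rmult_le_reg_r with (2 * INR Q ^ 2). nra. unfold Rdiv. rewrite Rmult_assoc, Rinv_l by nra. nra. }
  assert (Hbm : forall m, (1 <= m <= N)%nat -> Rabs (beta * (2 * INR m + 1)) <= / (2 * INR Q)).
  { intros m Hm. rewrite Rabs_mult, Rmult_comm. eapply Rle_trans; [|exact Hbeta].
    apply Rmult_le_compat_r. apply Rabs_pos.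
    assert (INR m <= INR N) by (apply le_INR; lia). pose proof (pos_INR m).
    rewrite Rabs_right by lra. lra. }
  assert (HDm : forall m, (1 <= m <= N)%nat -> PI * d <= PI * Dm m <= PI * (1 - d)).
  { intros m Hm. pose proof (Hbm m Hm) as Hx. apply Rabs_le_between in Hx.
    unfold Dm, d.
    assert (INR b * INR r / (2 * INR Q ^ 2) <= INR r / (2 * INR Q)).
    { unfold Rdiv. apply Rmult_le_reg_r with (2 * INR Q ^ 2). nra.
      rewrite Rmult_assoc, Rinv_l by nra.
      replace (INR r * / (2 * INR Q) * (2 * INR Q ^ 2)) with (INR r * INR Q) by (field; lra). nra. }
    assert (INR b * INR r / (2 * INR Q ^ 2) <= INR b / (2 * INR Q)).
    { unfold Rdiv. apply Rmult_le_reg_r with (2 * INR Q ^ 2). nra.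
      rewrite Rmult_assoc, Rinv_l by nra.
      replace (INR b * / (2 * INR Q) * (2 * INR Q ^ 2)) with (INR b * INR Q) by (field; lra). nra. }
    assert (INR r / (2 * INR Q) <= INR r / INR Q - / (2 * INR Q)).
    { unfold Rdiv. replace (INR r * / INR Q - / (2 * INR Q)) with ((INR r - / 2) * / INR Q) by (field; lra).
      replace (INR r * / (2 * INR Q)) with (INR r / 2 * / INR Q) by (field; lra).
      apply Rmult_le_compat_r. left; apply Rinv_0_lt_compat; lra. lra. }
    assert (INR r / INR Q + / (2 * INR Q) <= 1 - INR b / (2 * INR Q)).
    { assert (Heq : 1 - INR b / (2 * INR Q) - (INR r / INR Q + / (2 * INR Q)) = (INR b - 1) / (2 * INR Q)) by (rewrite HQr; field; lra).
      assert (0 <= (INR b - 1) / (2 * INR Q)) by (apply Rdiv_le_0_compat; lra). lra. }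
    split; apply Rmult_le_compat_l; lra. }
  assert (Hsin : forall m, (1 <= m <= N)%nat -> sin (PI * Dm m) <> 0).
  { intros m Hm. destruct (HDm m Hm). pose proof (sin_lb_delta _ d Hd H0 H1). lra. }
  unfold Tb.
  rewrite (cs_ext _ (fun m => Cmult ((fun m => (- / 2, - cot (PI * Dm m) / 2)) m)
                       (Cminus ((fun m => e (phi m)) (S m)) ((fun m => e (phi m)) m)))).
  2:{ intros m Hm. cbv beta.
      replace (beta * INR m ^ 2 - IZR (Z.of_nat b) * INR m / INR Q) with (phi m + IZR (- Z.of_nat m)).
      2:{ unfold phi. rewrite opp_IZR, <- !INR_IZR_INZ. unfold r. rewrite minus_INR by lia. field. lra. }
      rewrite e_per. replace (phi (S m)) with (phi m + Dm m) by (unfold phi, Dm; rewrite S_INR; field; lra).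
      apply kl_step. apply Hsin; auto. }
  set (B := INR Q * (/ INR b + / INR r)).
  apply Rle_trans with (2 * / 2 + 4 * B).
  2:{ unfold B. right. fold r. field. lra. }
  apply (abel_bound (fun m => e (phi m)) (fun m => (- / 2, - cot (PI * Dm m) / 2)) (fun m => - cot (PI * Dm m) / 2) (- / 2)); auto.
  - intros. rewrite Cmod_e. lra.
  -
    destruct (Rle_lt_dec 0 beta).
    + left. intros m H1 H2. assert (Dm m <= Dm (S m)) by (unfold Dm; rewrite S_INR; nra).
      destruct (HDm m ltac:(lia)). destruct (HDm (S m) ltac:(lia)).
      assert (cot (PI * Dm (S m)) <= cot (PI * Dm m)).
      { apply cot_decr; nra. }
      lra.
    + right. intros m H1 H2. assert (Dm (S m) <= Dm m) by (unfold Dm; rewrite S_INR; nra).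
      destruct (HDm m ltac:(lia)). destruct (HDm (S m) ltac:(lia)).
      assert (cot (PI * Dm m) <= cot (PI * Dm (S m))).
      { apply cot_decr; nra. }
      lra.
  - rewrite Rabs_Ropp, Rabs_right by lra. lra.
  - intros m Hm. destruct (HDm m Hm). pose proof (cot_bound _ d Hd H0 H1).
    unfold Rdiv. rewrite Rabs_mult, Rabs_Ropp, (Rabs_right (/2)) by lra.
    replace B with (/ d / 2).
    + lra.
    + unfold B, d. rewrite HQr. field. lra.
Qed.

Lemma rs_diff_bound (f g : nat -> R) l N :
  Rabs (sum_n_m f l N - sum_n_m g l N) <= sum_n_m (fun m => Rabs (f m - g m)) l N.
Proof.
  induction N.
  - destruct l. + rewrite !sum_n_n. lra. + rewrite !rs_lt by lia. rewrite Rminus_0_r, Rabs_R0. lra.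
  - destruct (le_lt_dec l (S N)).
    + rewrite !rs_Sm by lia.
      replace (sum_n_m f l N + f (S N) - (sum_n_m g l N + g (S N))) with
        ((sum_n_m f l N - sum_n_m g l N) + (f (S N) - g (S N))) by ring.
      eapply Rle_trans. apply Rabs_triang. lra.
    + rewrite !rs_lt by lia. rewrite Rminus_0_r, Rabs_R0. lra.
Qed.

Lemma comp_bound (F : R -> R) (Lr : nat -> R) (N : nat) (X K : R) :
  (forall a b, ex_RInt F a b) -> (forall x, Rabs (F x) <= 1) ->
  INR N <= X <= INR N + 1 -> (1 <= N)%nat ->
  (forall m, (1 <= m <= N)%nat -> Rabs (Lr m - RInt F (INR m) (INR m + 1)) <= K) ->
  Rabs (sum_n_m Lr 1 N - RInt F 0 X) <= INR N * K + 2.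
Proof.
  intros Hex HF HX HN HK.
  assert (HN1 : 1 <= INR N) by (apply (le_INR 1); lia).
  assert (E1 : RInt F 0 X = RInt F 0 1 + (RInt F 1 (INR N + 1) + RInt F (INR N + 1) X)).
  { change (RInt F 1 (INR N + 1) + RInt F (INR N + 1) X) with (plus (RInt F 1 (INR N + 1)) (RInt F (INR N + 1) X)).
    rewrite RInt_Chasles by auto.
    change (RInt F 0 1 + RInt F 1 X) with (plus (RInt F 0 1) (RInt F 1 X)).
    rewrite RInt_Chasles by auto. reflexivity. }
  rewrite E1. rewrite <- (sum_RInt F Hex N).
  assert (B1 : Rabs (RInt F 0 1) <= 1).
  { replace 1 with (1 - 0) at 2 by ring. apply RInt_bound1; auto; lra. }
  assert (B2 : Rabs (RInt F (INR N + 1) X) <= 1).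
  { rewrite <- opp_RInt_swap by auto. unfold opp; simpl. rewrite Rabs_Ropp.
    eapply Rle_trans. apply RInt_bound1; auto; lra. lra. }
  assert (B3 : Rabs (sum_n_m Lr 1 N - sum_n_m (fun m => (RInt F (INR m) (INR m + 1) : R)) 1 N) <= INR N * K).
  { eapply Rle_trans. apply rs_diff_bound. eapply Rle_trans. apply rs_le. intros m Hm. apply (HK m Hm).
    rewrite rs_const by lia. replace (S N - 1)%nat with N by lia. lra. }
  replace (sum_n_m Lr 1 N - (RInt F 0 1 + (sum_n_m (fun m => (RInt F (INR m) (INR m + 1) : R)) 1 N + RInt F (INR N + 1) X)))
    with ((sum_n_m Lr 1 N - sum_n_m (fun m => (RInt F (INR m) (INR m + 1) : R)) 1 N) + (- RInt F 0 1) + (- RInt F (INR N + 1) X)) by ring.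
  eapply Rle_trans. apply Rabs_triang. eapply Rle_trans. apply Rplus_le_compat_r. apply Rabs_triang.
  rewrite !Rabs_Ropp. lra.
Qed.

Lemma fst_sum (F : nat -> C) l N : fst (sum_n_m F l N) = sum_n_m (fun m => fst (F m)) l N.
Proof.
  induction N.
  - destruct l. + rewrite !sum_n_n. reflexivity. + rewrite cs_lt, rs_lt by lia. reflexivity.
  - destruct (le_lt_dec l (S N)).
    + rewrite cs_Sm, rs_Sm by lia. simpl. rewrite IHN. reflexivity.
    + rewrite cs_lt, rs_lt by lia. reflexivity.
Qed.

Lemma snd_sum (F : nat -> C) l N : snd (sum_n_m F l N) = sum_n_m (fun m => snd (F m)) l N.
Proof.
  induction N.
  - destruct l. + rewrite !sum_n_n. reflexivity. + rewrite cs_lt, rs_lt by lia. reflexivity.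
  - destruct (le_lt_dec l (S N)).
    + rewrite cs_Sm, rs_Sm by lia. simpl. rewrite IHN. reflexivity.
    + rewrite cs_lt, rs_lt by lia. reflexivity.
Qed.

Lemma cs_const1' N : sum_n_m (fun _ : nat => RtoC 1) 1 N = RtoC (INR N).
Proof.
  induction N.
  - rewrite cs_lt by lia. reflexivity.
  - rewrite cs_Sm by lia. rewrite IHN, S_INR. unfold Cplus, RtoC; simpl. apply Ceq; ring.
Qed.

Lemma T0_beta0 (Q N : nat) (X : R) : INR N <= X <= INR N + 1 ->
  Cmod (Cminus (Tb Q N 0 0) (RInt (V := C_R_CompleteNormedModule) (fun x => e (x ^ 2 * 0)) 0 X)) <= 1.
Proof.
  intros HX. rewrite RInt_C. unfold Tb.
  rewrite (cs_ext _ (fun _ => RtoC 1)).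
  2:{ intros. rewrite <- e_0. f_equal. change (IZR 0) with 0. unfold Rdiv. ring. }
  rewrite cs_const1'.
  rewrite (RInt_ext (cf 0) (fun _ => 1)). 2:{ intros. unfold cf. rewrite Rmult_0_r, Rmult_0_r. apply cos_0. }
  rewrite (RInt_ext (sf 0) (fun _ => 0)). 2:{ intros. unfold sf. rewrite Rmult_0_r, Rmult_0_r. apply sin_0. }
  rewrite !RInt_const. unfold scal; simpl. unfold mult; simpl.
  unfold Cminus, Cplus, Copp, RtoC; simpl.
  eapply Rle_trans. apply Cmod_le_abs.
  replace (0 + - ((X - 0) * 0)) with 0 by ring. rewrite Rabs_R0.
  replace (INR N + - ((X - 0) * 1)) with (INR N - X) by ring.
  rewrite Rabs_left1 by lra. lra.
Qed.

Lemma T0_beta (Q N : nat) (beta X : R) : (1 <= N)%nat -> (1 <= Q)%nat -> beta <> 0 ->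
  INR N <= X <= INR N + 1 ->
  (2 * INR N + 1) * Rabs beta <= / (2 * INR Q) ->
  Cmod (Cminus (Tb Q N beta 0) (RInt (V := C_R_CompleteNormedModule) (fun x => e (x ^ 2 * beta)) 0 X)) <= 11.
Proof.
  intros HN HQ Hb0 HX Hbeta. pose proof PI_RGT_3. pose proof PI_4.
  assert (HQ1 : 1 <= INR Q) by (apply (le_INR 1); lia).
  assert (HN1 : 1 <= INR N) by (apply (le_INR 1); lia).
  set (phi := fun m : nat => INR m ^ 2 * beta).
  set (Dm := fun m : nat => (2 * INR m + 1) * beta).
  assert (HDm : forall m, (1 <= m <= N)%nat -> 0 < Rabs (PI * Dm m) <= PI / 2).
  { intros m Hm. unfold Dm. assert (INR m <= INR N) by (apply le_INR; lia). pose proof (pos_INR m).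
    rewrite !Rabs_mult, (Rabs_right PI), (Rabs_right (2 * INR m + 1)) by lra.
    pose proof (Rabs_pos_lt beta Hb0). split. apply Rmult_lt_0_compat; nra.
    assert ((2 * INR m + 1) * Rabs beta <= / 2).
    { eapply Rle_trans; [|eapply Rle_trans; [exact Hbeta|]].
      - apply Rmult_le_compat_r; lra.
      - apply Rinv_le_contravar; lra. }
    nra. }
  assert (HD0 : forall m, (1 <= m <= N)%nat -> PI * Dm m <> 0).
  { intros m Hm. pose proof (HDm m Hm). intro Hc. rewrite Hc, Rabs_R0 in H1. lra. }
  assert (HD1 : forall m, (1 <= m <= N)%nat -> Dm m <> 0).
  { intros m Hm Hc. apply (HD0 m Hm). rewrite Hc. ring. }
  assert (HD2 : forall m, (1 <= m <= N)%nat -> (2 * INR m + 1) * beta <> 0) by exact HD1.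
  assert (HPI : PI <> 0) by lra.
  assert (Hsin : forall m, (1 <= m <= N)%nat -> sin (PI * Dm m) <> 0).
  { intros m Hm. pose proof (HDm m Hm). destruct (Rle_lt_dec 0 (PI * Dm m)).
    - rewrite Rabs_right in H1 by lra. pose proof (sin_gt_0 (PI * Dm m) ltac:(lra) ltac:(lra)). lra.
    - rewrite Rabs_left in H1 by lra. pose proof (sin_gt_0 (- (PI * Dm m)) ltac:(lra) ltac:(lra)).
      rewrite sin_neg in H2. lra. }
  set (hc := fun m : nat => ((- / 2)%R, (- gfun (PI * Dm m) / 2)%R) : C).
  set (io := fun m : nat => (0%R, (- / (2 * PI * Dm m))%R) : C).
  set (z := fun m : nat => e (phi m)).
  unfold Tb.
  rewrite (cs_ext _ (fun m => Cplus (Cmult (hc m) (Cminus (z (S m)) (z m))) (Cmult (io m) (Cminus (z (S m)) (z m))))).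
  2:{ intros m Hm. replace (beta * INR m ^ 2 - IZR 0 * INR m / INR Q) with (phi m).
      2:{ unfold phi. change (IZR 0) with 0. unfold Rdiv. ring. }
      rewrite <- Cmult_plus_distr_r. unfold z.
      replace (phi (S m)) with (phi m + Dm m) by (unfold phi, Dm; rewrite S_INR; ring).
      replace (Cplus (hc m) (io m)) with (((- / 2)%R, (- cot (PI * Dm m) / 2)%R) : C).
      - apply kl_step. auto.
      - unfold hc, io, Cplus; simpl. apply Ceq. ring. unfold gfun. field.
        repeat split; auto. }
  rewrite cs_plus.
  set (A1 := sum_n_m (fun m => Cmult (hc m) (Cminus (z (S m)) (z m))) 1 N).
  set (Ls := sum_n_m (fun m => Cmult (io m) (Cminus (z (S m)) (z m))) 1 N).
  assert (HA1 : Cmod A1 <= 3).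
  { unfold A1. replace 3 with (2 * / 2 + 4 * / 2) by field.
    apply (abel_bound z hc (fun m => - gfun (PI * Dm m) / 2) (- / 2)); auto.
    - intros. unfold z. rewrite Cmod_e. lra.
    - destruct (Rle_lt_dec 0 beta).
      + left. intros m H1 H2. destruct (HDm m ltac:(lia)). destruct (HDm (S m) ltac:(lia)).
        assert (0 < Dm m) by (unfold Dm; assert (0 < beta) by (destruct r; auto; congruence); pose proof (pos_INR m); nra).
        assert (Dm m <= Dm (S m)) by (unfold Dm; rewrite S_INR; nra).
        rewrite Rabs_right in * by nra.
        assert (gfun (PI * Dm (S m)) <= gfun (PI * Dm m)) by (apply gfun_decr; nra). lra.
      + right. intros m H1 H2. destruct (HDm m ltac:(lia)). destruct (HDm (S m) ltac:(lia)).
        assert (Dm m < 0) by (unfold Dm; pose proof (pos_INR m); nra).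
        assert (Dm (S m) <= Dm m) by (unfold Dm; rewrite S_INR; nra).
        rewrite Rabs_left in * by nra.
        assert (PI * Dm m < 0) by (rewrite <- (Rmult_0_r PI); apply Rmult_lt_compat_l; lra).
        assert (PI * Dm (S m) <= PI * Dm m) by (apply Rmult_le_compat_l; lra).
        assert (gfun (- (PI * Dm (S m))) <= gfun (- (PI * Dm m))) by (apply gfun_decr; lra).
        rewrite !gfun_odd in H11. lra.
    - rewrite Rabs_Ropp, Rabs_right by lra. lra.
    - intros m Hm. destruct (HDm m Hm).
      assert (Rabs (gfun (PI * Dm m)) <= 1).
      { destruct (Rle_lt_dec 0 (PI * Dm m)).
        - rewrite Rabs_right in * by lra. apply gfun_bound; lra.
        - rewrite Rabs_left in * by lra. replace (PI * Dm m) with (- (- (PI * Dm m))) by ring.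
          rewrite gfun_odd, Rabs_Ropp. apply gfun_bound; lra. }
      unfold Rdiv. rewrite Rabs_mult, Rabs_Ropp, (Rabs_right (/2)) by lra. lra. }
  assert (Hc : forall m, (1 <= m <= N)%nat ->
    Rabs (fst (Cmult (io m) (Cminus (z (S m)) (z m))) - RInt (cf beta) (INR m) (INR m + 1)) <= 2 * PI * Rabs beta).
  { intros m Hm. rewrite <- Rabs_Ropp.
    replace (- (fst (Cmult (io m) (Cminus (z (S m)) (z m))) - RInt (cf beta) (INR m) (INR m + 1))) with
      (RInt (cf beta) (INR m) (INR m + 1) - (sin (2 * PI * ((INR m + 1) ^ 2 * beta)) - sin (2 * PI * (INR m ^ 2 * beta))) / (2 * PI * ((2 * INR m + 1) * beta))).
    - apply piece_cos; auto. apply pos_INR.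
    - unfold io, z, phi. rewrite S_INR. unfold e, Cmult, Cminus, Cplus, Copp; cbn [fst snd]. unfold Dm. field.
      pose proof (HD2 m Hm). pose proof (pos_INR m). repeat split; auto; lra. }
  assert (Hs : forall m, (1 <= m <= N)%nat ->
    Rabs (snd (Cmult (io m) (Cminus (z (S m)) (z m))) - RInt (sf beta) (INR m) (INR m + 1)) <= 2 * PI * Rabs beta).
  { intros m Hm. rewrite <- Rabs_Ropp.
    replace (- (snd (Cmult (io m) (Cminus (z (S m)) (z m))) - RInt (sf beta) (INR m) (INR m + 1))) with
      (RInt (sf beta) (INR m) (INR m + 1) - (cos (2 * PI * (INR m ^ 2 * beta)) - cos (2 * PI * ((INR m + 1) ^ 2 * beta))) / (2 * PI * ((2 * INR m + 1) * beta))).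
    - apply piece_sin; auto. apply pos_INR.
    - unfold io, z, phi. rewrite S_INR. unfold e, Cmult, Cminus, Cplus, Copp; cbn [fst snd]. unfold Dm. field.
      pose proof (HD2 m Hm). pose proof (pos_INR m). repeat split; auto; lra. }
  assert (HNb : INR N * (2 * PI * Rabs beta) <= 2).
  { assert (2 * INR N * Rabs beta <= / 2).
    { eapply Rle_trans; [|eapply Rle_trans; [exact Hbeta|]].
      - pose proof (Rabs_pos beta). nra.
      - apply Rinv_le_contravar; lra. }
    nra. }
  assert (HX' : INR N <= X <= INR N + 1) by lra.
  pose proof (comp_bound (cf beta) (fun m => fst (Cmult (io m) (Cminus (z (S m)) (z m)))) N X _ (cf_ex beta) (cf_le1 beta) HX' HN Hc) as Bc.
  pose proof (comp_bound (sf beta) (fun m => snd (Cmult (io m) (Cminus (z (S m)) (z m)))) N X _ (sf_ex beta) (sf_le1 beta) HX' HN Hs) as Bs.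
  rewrite <- fst_sum in Bc. rewrite <- snd_sum in Bs. fold Ls in Bc, Bs.
  rewrite RInt_C.
  replace (Cminus (Cplus A1 Ls) (RInt (cf beta) 0 X, RInt (sf beta) 0 X)) with
     (Cplus A1 (fst Ls - RInt (cf beta) 0 X, snd Ls - RInt (sf beta) 0 X)).
  2:{ destruct A1, Ls. unfold Cminus, Cplus, Copp; simpl. apply Ceq; ring. }
  eapply Rle_trans. apply Cmod_triangle. eapply Rle_trans. apply Rplus_le_compat_l. apply Cmod_le_abs.
  lra.
Qed.

Lemma harm_step n : (1 <= n)%nat -> ln (INR n) + / (INR n + 1) <= ln (INR n + 1).
Proof.
  intros Hn. assert (H1 : 1 <= INR n) by (apply (le_INR 1); lia).
  set (x := / (INR n + 1)).
  assert (Hx : 1 - x <= exp (- x)) by (pose proof (exp_ineq1_le (- x)); lra).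
  assert (Hex : exp x * exp (- x) = 1) by (rewrite <- exp_plus; replace (x + - x) with 0 by ring; apply exp_0).
  assert (He : INR n * exp x <= INR n + 1).
  { assert (1 - x = INR n / (INR n + 1)) by (unfold x; field; lra).
    pose proof (exp_pos x). pose proof (exp_pos (- x)).
    assert (INR n / (INR n + 1) * exp x <= 1) by nra.
    apply Rmult_le_reg_r with (/ (INR n + 1)). apply Rinv_0_lt_compat; lra.
    replace ((INR n + 1) * / (INR n + 1)) with 1 by (field; lra).
    replace (INR n * exp x * / (INR n + 1)) with (INR n / (INR n + 1) * exp x) by (field; lra). lra. }
  replace (ln (INR n) + x) with (ln (INR n * exp x)).
  - apply ln_le; auto. pose proof (exp_pos x). nra.
  - rewrite ln_mult, ln_exp; auto; try lra. apply exp_pos.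
Qed.

Lemma harm_bound n : (1 <= n)%nat -> sum_n_m (fun b => / INR b) 1 n <= 1 + ln (INR n).
Proof.
  intros Hn. induction n; [lia|]. destruct n.
  - rewrite sum_n_n. simpl. rewrite ln_1. lra.
  - rewrite rs_Sm by lia. specialize (IHn ltac:(lia)).
    pose proof (harm_step (S n) ltac:(lia)). cbv beta. rewrite (S_INR (S n)). eapply Rle_trans; [apply Rplus_le_compat_r; exact IHn|]. lra.
Qed.

Lemma rs_reflect (g : nat -> R) n : sum_n_m (fun b => g (S n - b)%nat) 1 n = sum_n_m g 1 n.
Proof.
  induction n.
  - rewrite !rs_lt by lia. reflexivity.
  - rewrite (sum_Sn_m _ 1 (S n)) by lia. rewrite (rs_Sm g 1 n) by lia.
    rewrite <- (sum_n_m_S (G:=R_AbelianMonoid)).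
    rewrite (rs_ext (fun k => g (S (S n) - S k)%nat) (fun b => g (S n - b)%nat)) by (intros; f_equal; lia).
    rewrite IHn. replace (S (S n) - 1)%nat with (S n) by lia. change (plus ?a ?b) with (a + b). match goal with |- ?a = ?b => change (@eq R a b) end. ring.
Qed.

Lemma gs_shift {G : AbelianMonoid} (F : nat -> G) a m : sum_n_m F a (a + m) = sum_n_m (fun j => F (a + j)%nat) 0 m.
Proof.
  revert F. induction a; intros F.
  - apply sum_n_m_ext; intros; reflexivity.
  - replace (S a + m)%nat with (S (a + m)) by lia. rewrite <- sum_n_m_S. rewrite IHa.
    apply sum_n_m_ext. intros. f_equal; lia.
Qed.

Lemma gs_zero {G : AbelianMonoid} (F : nat -> G) l m : (forall k, (l <= k <= m)%nat -> F k = zero) -> sum_n_m F l m = zero.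
Proof. intros H. rewrite (sum_n_m_ext_loc _ (fun _ => zero)) by auto. apply sum_n_m_const_zero. Qed.

Lemma zsum_red {G : AbelianMonoid} (F : Z -> G) (lo hi : Z) (Q : nat) :
  (1 <= Q)%nat -> (lo < 0)%Z -> (Z.of_nat Q - 1 <= hi)%Z ->
  (forall b, (b < 0 \/ Z.of_nat Q <= b)%Z -> F b = zero) ->
  zsum lo hi F = sum_n_m (fun b => F (Z.of_nat b)) 0 (Q - 1).
Proof.
  intros HQ Hlo Hhi HF. unfold zsum.
  set (k0 := Z.to_nat (- lo)).
  set (n := Z.to_nat (hi - lo)).
  assert (Hk0 : (1 <= k0)%nat) by (unfold k0; lia).
  assert (Hn : (k0 + (Q - 1) <= n)%nat) by (unfold k0, n; lia).
  rewrite (sum_n_m_Chasles _ 1 (k0 - 1) n) by lia.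
  rewrite gs_zero.
  2:{ intros k Hk. apply HF. left. unfold k0 in Hk. lia. }
  rewrite plus_zero_l. replace (S (k0 - 1)) with k0 by lia.
  rewrite (sum_n_m_Chasles _ k0 (k0 + (Q - 1)) n) by lia.
  rewrite (gs_zero _ (S (k0 + (Q - 1))) n).
  2:{ intros k Hk. apply HF. right. unfold k0 in Hk. lia. }
  rewrite plus_zero_r. rewrite gs_shift. apply sum_n_m_ext_loc. intros j Hj. f_equal. unfold k0. lia.
Qed.

Lemma floorR_spec x : IZR (floorR x) <= x < IZR (floorR x) + 1.
Proof.
  unfold floorR. destruct (archimed x). rewrite minus_IZR. simpl. lra.
Qed.

Lemma Cmod_scal (r : R) (z : C) : 0 <= r -> Cmod (Cmult (RtoC r) z) = r * Cmod z.
Proof.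
  intros Hr. rewrite Cmod_mult. f_equal. unfold Cmod, RtoC; simpl.
  replace (r * (r * 1) + 0 * (0 * 1)) with (r * r) by ring. apply sqrt_square. auto.
Qed.

Lemma Cmod_0' : Cmod (RtoC 0) = 0.
Proof. unfold Cmod, RtoC; simpl. replace (0 * (0 * 1) + 0 * (0 * 1)) with 0 by ring. apply sqrt_0. Qed.

Theorem lemma4p1 :
  exists Cst : R, exists X0 : R, forall X : R, X0 <= X ->
  forall (q : Z) (beta : R),
    (1 <= q)%Z ->
    (q <= floorR (5 * X))%Z ->
    Rabs beta <= 1 / (IZR q * IZR (floorR (5 * X))) ->
    exists E : Z -> C,
      zsum (blo q) (bhi q) (fun b => Cmod (E b)) <= Cst * ln (IZR q + 2) /\
      forall a : Z, Z.gcd a q = 1%Z ->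
        fX X (IZR a / IZR q + beta) =
        Cplus (Cmult (Cdiv (S2 q a) (RtoC (IZR q)))
                     (RInt (V := C_R_CompleteNormedModule)
                           (fun x => e (x ^ 2 * beta)) 0 X))
              (zsum (blo q) (bhi q) (fun b => Cmult (S3 q a b) (E b))).
Proof.
  exists 28, 3. intros X HX q beta Hq HqP Hbeta.
  pose proof (floorR_spec X) as HfX. pose proof (floorR_spec (5 * X)) as HfP.
  set (P := floorR (5 * X)) in *.
  set (Q := Z.to_nat q).
  assert (HqQ : q = Z.of_nat Q) by (unfold Q; lia).
  assert (HQ1 : (1 <= Q)%nat) by lia.
  assert (HINRQ : IZR q = INR Q) by (rewrite HqQ, INR_IZR_INZ; reflexivity).
  assert (HQr : 1 <= INR Q) by (apply (le_INR 1); lia).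
  set (N := Z.to_nat (floorR X)).
  assert (HfX0 : (0 <= floorR X)%Z) by (apply le_IZR; lra).
  assert (HINRN : INR N = IZR (floorR X)) by (unfold N; rewrite INR_IZR_INZ, Z2Nat.id; auto).
  assert (HN1 : (1 <= N)%nat). { assert (1 <= floorR X)%Z by (apply le_IZR; lra). unfold N; lia. }
  assert (HXN : INR N <= X <= INR N + 1) by lra.
  assert (HP : 5 * X - 1 < IZR P) by lra.
  assert (Hbeta' : (2 * INR N + 1) * Rabs beta <= / (2 * INR Q)).
  { rewrite <- HINRQ. eapply Rle_trans. apply Rmult_le_compat_l. lra. exact Hbeta.
    assert (HPpos : 0 < IZR P) by lra. assert (HqPos : 1 <= IZR q) by (apply IZR_le; lia).
    unfold Rdiv. rewrite Rmult_1_l. rewrite Rinv_mult.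
    apply Rmult_le_reg_r with (2 * IZR q * IZR P). nra.
    replace ((2 * INR N + 1) * (/ IZR q * / IZR P) * (2 * IZR q * IZR P)) with (2 * (2 * INR N + 1)) by (field; lra).
    replace (/ (2 * IZR q) * (2 * IZR q * IZR P)) with (IZR P) by (field; lra). lra. }
  set (I := RInt (V := C_R_CompleteNormedModule) (fun x => e (x ^ 2 * beta)) 0 X).
  set (E := fun b : Z => if andb (0 <=? b)%Z (b <? q)%Z then
              Cmult (RtoC (/ INR Q)) (Cminus (Tb Q N beta b) (if (b =? 0)%Z then I else RtoC 0))
            else RtoC 0).
  assert (Hblo : (blo q < 0)%Z) by (unfold blo; Z.div_mod_to_equations; lia).
  assert (Hbhi : (Z.of_nat Q - 1 <= bhi q)%Z) by (unfold bhi; Z.div_mod_to_equations; lia).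
  assert (HEout : forall b, (b < 0 \/ Z.of_nat Q <= b)%Z -> E b = RtoC 0).
  { intros b Hb. unfold E. destruct (0 <=? b)%Z eqn:E1; destruct (b <? q)%Z eqn:E2; simpl; auto; lia. }
  exists E. split.
  -
    rewrite (zsum_red (G:=R_AbelianMonoid) _ _ _ Q HQ1 Hblo Hbhi).
    2:{ intros b Hb. rewrite HEout by auto. apply Cmod_0'. }
    assert (Hln3 : 1 <= ln 3).
    { rewrite <- (ln_exp 1). apply ln_le. apply exp_pos. apply exp_le_3. }
    assert (HlnQ : ln 3 <= ln (IZR q + 2)) by (apply ln_le; lra).
    assert (HE0 : Cmod (E (Z.of_nat 0)) <= 11).
    { unfold E.
      replace (andb (0 <=? Z.of_nat 0)%Z (Z.of_nat 0 <? q)%Z) with true by (symmetry; apply Bool.andb_true_iff; split; [apply Z.leb_le | apply Z.ltb_lt]; lia).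
      simpl (Z.of_nat 0 =? 0)%Z. change (Z.of_nat 0) with 0%Z.
      rewrite Cmod_scal by (left; apply Rinv_0_lt_compat; lra).
      assert (Cmod (Cminus (Tb Q N beta 0) I) <= 11).
      { destruct (Req_dec beta 0).
        - subst beta. eapply Rle_trans. apply T0_beta0; auto. lra.
        - apply T0_beta; auto. }
      apply Rle_trans with (1 * 11); [|lra].
      apply Rmult_le_compat; try lra. left; apply Rinv_0_lt_compat; lra. apply Cmod_ge0.
      rewrite <- Rinv_1. apply Rinv_le_contravar; lra. }
    assert (HEb : forall b, (1 <= b <= Q - 1)%nat -> Cmod (E (Z.of_nat b)) <= / INR Q + 4 * / INR b + 4 * / INR (Q - b)).
    { intros b Hb. unfold E.
      replace (andb (0 <=? Z.of_nat b)%Z (Z.of_nat b <? q)%Z) with true by (symmetry; apply Bool.andb_true_iff; split; [apply Z.leb_le | apply Z.ltb_lt]; lia).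
      replace (Z.of_nat b =? 0)%Z with false by (symmetry; apply Z.eqb_neq; lia).
      rewrite Cmod_scal by (left; apply Rinv_0_lt_compat; lra).
      replace (Cminus (Tb Q N beta (Z.of_nat b)) (RtoC 0)) with (Tb Q N beta (Z.of_nat b)).
      2:{ unfold Cminus, Cplus, Copp, RtoC. destruct (Tb Q N beta (Z.of_nat b)). simpl. apply Ceq; ring. }
      pose proof (KL_b Q N b beta HN1 ltac:(lia) ltac:(lia) Hbeta').
      assert (Hb1 : 1 <= INR b) by (apply (le_INR 1); lia).
      assert (Hb2 : 1 <= INR (Q - b)) by (apply (le_INR 1); lia).
      apply Rle_trans with (/ INR Q * (1 + 4 * INR Q * (/ INR b + / INR (Q - b)))).
      - apply Rmult_le_compat_l; auto. left; apply Rinv_0_lt_compat; lra.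
      - right. field. lra. }
    rewrite (sum_Sn_m _ 0 (Q - 1)) by lia. change (plus ?a ?b) with (a + b).
    destruct (Nat.eq_dec Q 1) as [HQe|HQe].
    + rewrite HQe. simpl (1 - 1)%nat. rewrite rs_lt by lia. nra.
    + assert (HS : sum_n_m (fun b => Cmod (E (Z.of_nat b))) 1 (Q - 1) <= 1 + 8 * (1 + ln (INR (Q - 1)))).
      { eapply Rle_trans. apply rs_le. apply HEb.
        rewrite !rs_plus, rs_const by lia. rewrite !rs_mult_l.
        replace (sum_n_m (fun b => / INR (Q - b)) 1 (Q - 1)) with (sum_n_m (fun b => / INR b) 1 (Q - 1)).
        2:{ rewrite <- (rs_reflect (fun b => / INR b) (Q - 1)). apply rs_ext. intros. f_equal. f_equal. lia. }
        pose proof (harm_bound (Q - 1) ltac:(lia)).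
        replace (S (Q - 1) - 1)%nat with (Q - 1)%nat by lia.
        assert (INR (Q - 1) * / INR Q <= 1).
        { rewrite minus_INR by lia. simpl. apply Rmult_le_reg_r with (INR Q). lra.
          rewrite Rmult_assoc, Rinv_l by lra. lra. }
        lra. }
      assert (ln (INR (Q - 1)) <= ln (IZR q + 2)).
      { apply ln_le. apply lt_0_INR. lia. rewrite minus_INR by lia. simpl. lra. }
      eapply Rle_trans. apply Rplus_le_compat. exact HE0. exact HS. nra.
  - intros a _.
    rewrite (zsum_red (G:=C_AbelianMonoid) _ _ _ Q HQ1 Hblo Hbhi).
    2:{ intros b Hb. rewrite HEout by auto. apply Cmult_0_r. }
    assert (HS3 : forall b, S3 q a b = S3' Q a b).
    { intros b. unfold S3, S3'. fold Q. rewrite HINRQ. reflexivity. }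
    unfold fX. fold N. rewrite HINRQ.
    rewrite <- (ident Q N a beta HQ1).
    unfold S2. rewrite !HS3.
    rewrite (cs_ext (fun b => Cmult (S3 q a (Z.of_nat b)) (E (Z.of_nat b)))
               (fun b => Cmult (S3' Q a (Z.of_nat b)) (Cmult (RtoC (/ INR Q))
                   (Cminus (Tb Q N beta (Z.of_nat b)) (if (Z.of_nat b =? 0)%Z then I else RtoC 0))))).
    2:{ intros b Hb. rewrite HS3. f_equal. unfold E.
        replace (andb (0 <=? Z.of_nat b)%Z (Z.of_nat b <? q)%Z) with true by (symmetry; apply Bool.andb_true_iff; split; [apply Z.leb_le | apply Z.ltb_lt]; lia).
        reflexivity. }
    rewrite !(sum_Sn_m _ 0 (Q - 1)) by lia. change (plus ?a ?b) with (Cplus a b).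
    rewrite (cs_ext (fun b => Cmult (S3' Q a (Z.of_nat b)) (Cmult (RtoC (/ INR Q))
                   (Cminus (Tb Q N beta (Z.of_nat b)) (if (Z.of_nat b =? 0)%Z then I else RtoC 0))))
               (fun b => Cmult (S3' Q a (Z.of_nat b)) (Cmult (RtoC (/ INR Q)) (Tb Q N beta (Z.of_nat b))))).
    2:{ intros b Hb. replace (Z.of_nat b =? 0)%Z with false by (symmetry; apply Z.eqb_neq; lia).
        f_equal. f_equal. generalize (Tb Q N beta (Z.of_nat b)). intros [u v]. unfold Cminus, Cplus, Copp, RtoC; simpl. apply Ceq; ring. }
    simpl (Z.of_nat 0 =? 0)%Z.
    unfold Cdiv. rewrite <- RtoC_inv by lra.
    match goal with |- ?a = ?b => change (@eq C a b) end. change (Z.of_nat 0) with 0%Z. ring.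
Qed.
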